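(* Let $A$ be a real $m\times n$ matrix with $r:=\operatorname{rank}(A)<n$ and let $k:=n-r$. Let $\beta\in\mathbb R_m$, $\varepsilon\ge0$, $F\in S(A,\beta,\varepsilon)$, and let $y\in\mathbb R_n$, $\delta\ge0$ with $\|Ay^T-\beta^T\|_\infty\le\delta$. Put $D:=(A^T)^\dagger$. Fix a basis $(x_1^T,\dots,x_k^T)$ of $\ker(A)$, let $x_{sj}$ be the $j$-th coordinate of $x_s$, and let $X:=(x_{sj})$ be the $k\times n$ matrix with rows $x_1,\dots,x_k$. Define $\pi_s(u):=u^{x_s}$ for $u\in\mathbb R_n^+$, and for $w\in\mathbb R_k^+$ define $$\psi(w):=\exp\big(X^\dagger\log(w)^T\big)\in\mathbb R_n^+,\qquad G(w):=F(\psi(w))/\psi(w)^y.$$ Let $M:=\max\{|x_{sj}|:1\le s\le k,\,1\le j\le n\}$ and let $K>1$. Then for every $v=(v_1,\dots,v_n)\in\mathbb R_n^+$ with $K^{-1}\le v_i\le K$ for all $i$, $$|F(v)-G(\pi_1(v),\dots,\pi_k(v))v^y|\le|F(v)|\Big((1+\varepsilon)K^{m\delta\|D\|(nM\|X^\dagger\|+1)}-1\Big).$$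
   Context: $\mathbb R_m$ denotes real row vectors of length $m$, $\mathbb R_m^+$ those with all entries strictly positive (similarly $\mathbb R_n^+,\mathbb R_k^+$). For $c\in\mathbb R_m^+$ and $\alpha\in\mathbb R_m$, $c^\alpha:=\prod_i c_i^{\alpha_i}$ (similarly $u^x$, $v^y$). For a row vector $w=(w_1,\dots,w_k)$ with positive entries, $\log(w):=(\log w_1,\dots,\log w_k)$ (natural logarithm), and for a column vector $z=(z_1,\dots,z_n)^T$, $\exp(z):=(e^{z_1},\dots,e^{z_n})$ (a row vector). For a real $m\times n$ matrix $A$ with columns $\alpha_1^T,\dots,\alpha_n^T$, $\beta\in\mathbb R_m$ and $\varepsilon\ge0$, $S(A,\beta,\varepsilon)$ is the set of all $F:\mathbb R_n^+\to\mathbb R$ with $$|F(v_1c^{\alpha_1},\dots,v_nc^{\alpha_n})-F(v_1,\dots,v_n)c^\beta|\le\varepsilon|F(v_1,\dots,v_n)|c^\beta$$ for all $v_1,\dots,v_n>0$ and all $c\in\mathbb R_m^+$. $B^\dagger$ is the Moore–Penrose pseudoinverse of a real matrix $B$; $\|\cdot\|_\infty$ is the maximum norm and $\|B\|=\max_i\sum_j|b_{ij}|$ the induced matrix norm. *)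

(* Defs.v *)
From Stdlib Require Import Reals.
From mathcomp Require Import all_boot.
Set Implicit Arguments.
Unset Strict Implicit.
Unset Printing Implicit Defensive.

Local Open Scope R_scope.

Definition vec (n : nat) := 'I_n -> R.
Definition mat (m n : nat) := 'I_m -> 'I_n -> R.

Definition Rsum (n : nat) (f : 'I_n -> R) : R := \big[Rplus/0]_(j < n) f j.
Definition Rprod (n : nat) (f : 'I_n -> R) : R := \big[Rmult/1]_(j < n) f j.
Definition Rmaxb (n : nat) (f : 'I_n -> R) : R := \big[Rmax/0]_(j < n) f j.

Definition trmat (m n : nat) (B : mat m n) : mat n m := fun j i => B i j.
Definition mulmat (m n p : nat) (B : mat m n) (C : mat n p) : mat m p :=
  fun i l => Rsum (fun j => B i j * C j l).

Definition is_pinv (m n : nat) (B : mat m n) (P : mat n m) : Prop :=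
  mulmat (mulmat B P) B = B /\
  mulmat (mulmat P B) P = P /\
  trmat (mulmat B P) = mulmat B P /\
  trmat (mulmat P B) = mulmat P B.

Definition vpow (n : nat) (c : vec n) (a : vec n) : R :=
  Rprod (fun i => Rpower (c i) (a i)).

Definition posv (n : nat) (v : vec n) : Prop := forall i, 0 < v i.

Definition colv (m n : nat) (A : mat m n) (j : 'I_n) : vec m := fun i => A i j.
Definition rowv (k n : nat) (X : mat k n) (s : 'I_k) : vec n := fun j => X s j.

(* The class S(A, beta, eps); F is only ever used on R_n^+. *)
Definition inS (m n : nat) (A : mat m n) (beta : vec m) (eps : R)
  (F : vec n -> R) : Prop :=
  forall (v : vec n) (c : vec m), posv v -> posv c ->
    Rabs (F (fun j => v j * vpow c (colv A j)) - F v * vpow c beta)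
      <= eps * Rabs (F v) * vpow c beta.

(* maximum norm of a vector and induced (max row sum) matrix norm *)
Definition normInf (n : nat) (v : vec n) : R := Rmaxb (fun i => Rabs (v i)).
Definition mnorm (m n : nat) (B : mat m n) : R :=
  Rmaxb (fun i => Rsum (fun j => Rabs (B i j))).

Definition resid (m n : nat) (A : mat m n) (y : vec n) (beta : vec m) : vec m :=
  fun i => Rsum (fun j => A i j * y j) - beta i.

Definition kernel_basis (m n k : nat) (A : mat m n) (X : mat k n) : Prop :=
  (forall s i, Rsum (fun j => A i j * X s j) = 0) /\
  (forall c : vec k, (forall j, Rsum (fun s => c s * X s j) = 0) ->
     forall s, c s = 0) /\
  (forall x : vec n, (forall i, Rsum (fun j => A i j * x j) = 0) ->
     exists c : vec k, forall j, x j = Rsum (fun s => c s * X s j)).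

Definition psi (k n : nat) (Xd : mat n k) (w : vec k) : vec n :=
  fun j => exp (Rsum (fun s => Xd j s * ln (w s))).

(* Main.v *)
From HB Require Import structures.
Require Import Defs.
From Stdlib Require Import Reals Lra FunctionalExtensionality.
From Stdlib Require Import Reals.
From mathcomp Require Import all_boot.
Local Open Scope R_scope.

HB.instance Definition _ := Monoid.isComLaw.Build R 0 Rplus (fun a b c => esym (Rplus_assoc a b c)) Rplus_comm Rplus_0_l.
HB.instance Definition _ := Monoid.isComLaw.Build R 1 Rmult (fun a b c => esym (Rmult_assoc a b c)) Rmult_comm Rmult_1_l.
HB.instance Definition _ := Monoid.isMulLaw.Build R 0 Rmult Rmult_0_l Rmult_0_r.
HB.instance Definition _ := Monoid.isAddLaw.Build R Rmult Rplus Rmult_plus_distr_r Rmult_plus_distr_l.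

Lemma Rsum_ext n (f g : 'I_n -> R) : (forall j, f j = g j) -> Rsum f = Rsum g.
Proof. by move=> h; rewrite /Rsum; apply: eq_bigr => j _. Qed.
Lemma Rsum_add n (f g : 'I_n -> R) : Rsum (fun j => f j + g j) = Rsum f + Rsum g.
Proof. by rewrite /Rsum big_split. Qed.
Lemma Rsum_mull n a (f : 'I_n -> R) : Rsum (fun j => a * f j) = a * Rsum f.
Proof. by rewrite /Rsum big_distrr. Qed.
Lemma Rsum_mulr n a (f : 'I_n -> R) : Rsum (fun j => f j * a) = Rsum f * a.
Proof. by rewrite /Rsum big_distrl. Qed.
Lemma Rsum_swap n p (f : 'I_n -> 'I_p -> R) :
  Rsum (fun i => Rsum (fun j => f i j)) = Rsum (fun j => Rsum (fun i => f i j)).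
Proof. by rewrite /Rsum exchange_big. Qed.
Lemma Rsum_sub n (f g : 'I_n -> R) : Rsum (fun j => f j - g j) = Rsum f - Rsum g.
Proof.
have h : Rsum (fun j => f j - g j) + Rsum g = Rsum f.
  by rewrite -Rsum_add; apply: Rsum_ext => j; ring.
lra.
Qed.
Lemma Rsum0 n : Rsum (fun _ : 'I_n => 0) = 0.
Proof. by rewrite /Rsum big1. Qed.
Lemma Rsum_const n c : Rsum (fun _ : 'I_n => c) = INR n * c.
Proof.
rewrite /Rsum big_const_ord; elim: n => [|n IH] /=; first ring.
rewrite IH; destruct n; simpl; ring.
Qed.
Lemma Rsum_le n (f g : 'I_n -> R) : (forall j, f j <= g j) -> Rsum f <= Rsum g.
Proof.
move=> h; rewrite /Rsum; apply: (big_ind2 (fun x y => x <= y)); first lra.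
  by move=> *; lra.
by move=> j _; apply: h.
Qed.
Lemma Rsum_abs n (f : 'I_n -> R) : Rabs (Rsum f) <= Rsum (fun j => Rabs (f j)).
Proof.
rewrite /Rsum; apply: (big_ind2 (fun x y => Rabs x <= y)).
- rewrite Rabs_R0; lra.
- move=> x1 x2 y1 y2 h1 h2; have := Rabs_triang x1 y1; lra.
- by move=> j _; lra.
Qed.
Lemma Rsum_abs_le n (f g : 'I_n -> R) : (forall j, Rabs (f j) <= g j) -> Rabs (Rsum f) <= Rsum g.
Proof. move=> h; apply: (Rle_trans _ _ _ (Rsum_abs _ f)); exact: Rsum_le. Qed.

Lemma big_nonneg_ge (I : eqType) (r : seq I) (F : I -> R) x :
  (forall i, 0 <= F i) -> x \in r -> F x <= \big[Rplus/0]_(i <- r) F i.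
Proof.
move=> h; elim: r => [|a r IH] //=; rewrite in_cons big_cons.
case/orP => [/eqP -> | hx].
  have : 0 <= \big[Rplus/0]_(i <- r) F i.
    by apply: (big_ind (fun x => 0 <= x)) => // *; lra.
  lra.
have := IH hx; have := h a; lra.
Qed.
Lemma Rsum_ge n (f : 'I_n -> R) j : (forall i, 0 <= f i) -> f j <= Rsum f.
Proof. by move=> h; rewrite /Rsum; apply: big_nonneg_ge => //; rewrite mem_index_enum. Qed.

Lemma big_max_ge (I : eqType) (r : seq I) (F : I -> R) x :
  x \in r -> F x <= \big[Rmax/0]_(i <- r) F i.
Proof.
elim: r => [|a r IH] //=; rewrite in_cons big_cons.
case/orP => [/eqP -> | hx]; first exact: Rmax_l.
apply: (Rle_trans _ _ _ (IH hx)); exact: Rmax_r.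
Qed.
Lemma Rmaxb_ge n (f : 'I_n -> R) j : f j <= Rmaxb f.
Proof. by rewrite /Rmaxb; apply: big_max_ge; rewrite mem_index_enum. Qed.
Lemma Rmaxb_ge0 n (f : 'I_n -> R) : 0 <= Rmaxb f.
Proof.
rewrite /Rmaxb; elim: (index_enum _) => [|a r IH]; first by rewrite big_nil; lra.
rewrite big_cons; apply: (Rle_trans _ _ _ IH); exact: Rmax_r.
Qed.

Lemma vpow_exp n (c a : vec n) : vpow c a = exp (Rsum (fun i => a i * ln (c i))).
Proof.
rewrite /vpow /Rprod /Rsum /Rpower.
by rewrite (big_morph exp exp_plus exp_0).
Qed.

Set Implicit Arguments.
Definition app (p q : nat) (B : mat p q) (x : vec q) : vec p :=
  fun i => Rsum (fun j => B i j * x j).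
Definition dot (p : nat) (a b : vec p) : R := Rsum (fun i => a i * b i).

Lemma app_mul p q r (B : mat p q) (C : mat q r) (x : vec r) :
  app (mulmat B C) x = app B (app C x).
Proof.
apply: functional_extensionality => i; rewrite /app /mulmat.
under Rsum_ext => l do rewrite -Rsum_mulr.
rewrite Rsum_swap; apply: Rsum_ext => j; rewrite -Rsum_mull.
by apply: Rsum_ext => l; ring.
Qed.

Lemma dot_app p q (a : vec p) (B : mat p q) (x : vec q) :
  dot a (app B x) = dot (app (trmat B) a) x.
Proof.
rewrite /dot /app /trmat.
under Rsum_ext => i do rewrite -Rsum_mull.
under [RHS]Rsum_ext => j do rewrite -Rsum_mulr.
rewrite Rsum_swap; apply: Rsum_ext => j; apply: Rsum_ext => i; ring.
Qed.

Lemma app_sub p q (B : mat p q) (x y : vec q) :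
  app B (fun j => x j - y j) = fun i => app B x i - app B y i.
Proof.
apply: functional_extensionality => i; rewrite /app -Rsum_sub.
by apply: Rsum_ext => j; ring.
Qed.

Lemma app0 p q (B : mat p q) : app B (fun _ => 0) = fun _ => 0.
Proof.
apply: functional_extensionality => i; rewrite /app.
transitivity (Rsum (fun _ : 'I_q => 0)); [apply: Rsum_ext => j; ring | exact: Rsum0].
Qed.

Lemma dot0 p (a : vec p) : dot a (fun _ => 0) = 0.
Proof. rewrite /dot.
transitivity (Rsum (fun _ : 'I_p => 0)); [apply: Rsum_ext => j; ring | exact: Rsum0]. Qed.

Lemma trmat_mul p q r (B : mat p q) (C : mat q r) :
  trmat (mulmat B C) = mulmat (trmat C) (trmat B).
Proof.
apply: functional_extensionality => i; apply: functional_extensionality => j.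
rewrite /trmat /mulmat; apply: Rsum_ext => l; ring.
Qed.

Lemma dot_sq0 p (e : vec p) : dot e e = 0 -> forall j, e j = 0.
Proof.
move=> h j.
have hj : e j * e j <= dot e e by apply: (Rsum_ge _ (fun i => e i * e i)) => i; nra.
nra.
Qed.

Lemma final_ineq a T eps zr L : 0 <= eps -> Rabs (T - a) <= eps * Rabs a ->
  Rabs zr <= L -> Rabs (a - T * exp zr) <= Rabs a * ((1 + eps) * exp L - 1).
Proof.
move=> he hT hz.
have hzL : zr <= L /\ - L <= zr by split; [have := Rle_abs zr | have := Rle_abs (- zr); rewrite Rabs_Ropp]; lra.
have hr : exp zr <= exp L by case: hzL => h _; case: (Rle_lt_or_eq_dec _ _ h) => h';
  [apply: Rlt_le; exact: exp_increasing | rewrite h'; lra].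
have hr2 : exp (- L) <= exp zr by case: hzL => _ h; case: (Rle_lt_or_eq_dec _ _ h) => h';
  [apply: Rlt_le; exact: exp_increasing | rewrite h'; lra].
have hxy : exp (- L) * exp L = 1 by rewrite -exp_plus; replace (- L + L) with 0 by ring; exact: exp_0.
have hpos := exp_pos zr; have hposL := exp_pos (- L); have hL0 : 0 <= L by have := Rabs_pos zr; lra.
have hEL : 1 <= exp L by rewrite -exp_0; case: (Rle_lt_or_eq_dec _ _ hL0) => h;
  [apply: Rlt_le; exact: exp_increasing | rewrite -h; lra].
have h1 : Rabs (1 - exp zr) <= exp L - 1.
  apply: Rabs_le; split; last by nra.
  nra.
have -> : a - T * exp zr = a * (1 - exp zr) - exp zr * (T - a) by ring.
have := Rabs_triang (a * (1 - exp zr)) (- (exp zr * (T - a))).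
rewrite Rabs_Ropp !Rabs_mult (Rabs_right (exp zr)); last lra.
move=> ht.
have ha := Rabs_pos a.
have h2 : Rabs a * Rabs (1 - exp zr) <= Rabs a * (exp L - 1) by apply: Rmult_le_compat_l.
have h3 : exp zr * Rabs (T - a) <= exp L * (eps * Rabs a) by apply: Rmult_le_compat; try lra; exact: Rabs_pos.
replace (Rabs a * ((1 + eps) * exp L - 1)) with (Rabs a * (exp L - 1) + exp L * (eps * Rabs a)) by ring.
replace (a * (1 - exp zr) - exp zr * (T - a)) with (a * (1 - exp zr) + - (exp zr * (T - a))) by ring.
lra.
Qed.

Lemma dot0l p (a : vec p) : dot (fun _ => 0) a = 0.
Proof. rewrite /dot.
transitivity (Rsum (fun _ : 'I_p => 0)); [apply: Rsum_ext => j; ring | exact: Rsum0]. Qed.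

Lemma key m n k (A : mat m n) (D : mat m n) (X : mat k n) (Xd : mat n k) (u : vec n) :
  kernel_basis A X -> is_pinv (trmat A) D -> is_pinv X Xd ->
  let w := fun j => u j - app Xd (app X u) j in
  forall j, app (trmat A) (app D w) j = w j.
Proof.
move=> [kA [_ kS]] [p1 [_ [p3 _]]] [q1 _] w.
set P := mulmat (trmat A) D.
have hAP : mulmat A P = A.
  have h : trmat (mulmat P (trmat A)) = A by rewrite p1.
  by rewrite trmat_mul p3 in h.
have hPw : app (trmat A) (app D w) = app P w by rewrite app_mul.
set e := fun j => w j - app P w j.
have hAe : app A e = fun _ => 0.
  rewrite /e app_sub -app_mul hAP; apply: functional_extensionality => i; ring.
have hXw : app X w = fun _ => 0.
  rewrite /w app_sub -app_mul -app_mul q1; apply: functional_extensionality => i; ring.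
have [c hc] : exists c : vec k, forall j, e j = Rsum (fun s => c s * X s j).
  apply: kS => i; exact: (congr1 (fun f => f i) hAe).
have he : e = app (trmat X) c.
  apply: functional_extensionality => j; rewrite hc /app /trmat; apply: Rsum_ext => s; ring.
have hee : dot e e = 0.
  have -> : dot e e = dot e w - dot e (app P w)
    by rewrite /dot -Rsum_sub; apply: Rsum_ext => j; rewrite /e; ring.
  have -> : dot e w = 0 by rewrite {1}he -(dot_app c X w) hXw dot0.
  have -> : dot e (app P w) = 0.
    by rewrite -hPw (dot_app e (trmat A) (app D w)) hAe dot0l.
  ring.
move=> j; rewrite hPw; have := dot_sq0 hee j; rewrite /e; lra.
Qed.

Lemma ln_le' x y : 0 < x -> x <= y -> ln x <= ln y.
Proof.
move=> hx h; case: (Rle_lt_or_eq_dec _ _ h) => h'.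
  apply: Rlt_le; exact: ln_increasing.
rewrite h'; lra.
Qed.
Theorem theorem3p2 (m n k : nat) (A : mat m n) (beta : vec m) (eps : R)
  (F : vec n -> R) (y : vec n) (delta : R) (D : mat m n) (X : mat k n)
  (Xd : mat n k) (K : R) :
  (0 < k)%nat ->
  kernel_basis A X ->
  0 <= eps ->
  inS A beta eps F ->
  0 <= delta ->
  normInf (resid A y beta) <= delta ->
  is_pinv (trmat A) D ->
  is_pinv X Xd ->
  1 < K ->
  let G := fun w : vec k => F (psi Xd w) / vpow (psi Xd w) y in
  let M := Rmaxb (fun s => Rmaxb (fun j => Rabs (X s j))) in
  forall v : vec n, posv v ->
    (forall i, / K <= v i <= K) ->
    Rabs (F v - G (fun s => vpow v (rowv X s)) * vpow v y)
      <= Rabs (F v) *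
         ((1 + eps) *
            Rpower K (INR m * delta * mnorm D * (INR n * M * mnorm Xd + 1)) - 1).
Proof.
move=> hk hkb heps hS hdel hres hD hX hK G M v hv hvK.
set u := fun j => ln (v j).
set w := fun j => u j - app Xd (app X u) j.
set z := app D w.
have hkey : forall j, app (trmat A) z j = w j := key u hkb hD hX.
have hv_exp : forall j, v j = exp (u j) by move=> j; rewrite /u exp_ln.
have hXu : forall s, vpow v (rowv X s) = exp (app X u s) by move=> s; rewrite vpow_exp.
set pw := psi Xd (fun s => vpow v (rowv X s)).
have hpw : forall j, pw j = exp (app Xd (app X u) j).
  move=> j; rewrite /pw /psi; congr exp; apply: Rsum_ext => s; rewrite hXu ln_exp //.
set c' := fun i => exp (- z i).
have hc'pos : posv c' by move=> i; exact: exp_pos.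
have hpwpos : posv pw by move=> j; rewrite hpw; exact: exp_pos.
have hshift : (fun j => v j * vpow c' (colv A j)) = pw.
  apply: functional_extensionality => j.
  rewrite vpow_exp hpw hv_exp -exp_plus; congr exp.
  have -> : Rsum (fun i => colv A j i * ln (c' i)) = - w j.
       rewrite -hkey /app /trmat.
    transitivity (Rsum (fun i => -1 * (A i j * z i))); last by rewrite Rsum_mull; ring.
    by apply: Rsum_ext => i; rewrite /colv /c' ln_exp; ring.
  rewrite /w; ring.
have hS' := hS v c' hv hc'pos; rewrite hshift in hS'.
set nzb := Rsum (fun i => beta i * - z i).
have hcb : vpow c' beta = exp nzb.
  by rewrite vpow_exp; congr exp; apply: Rsum_ext => i; rewrite /c' ln_exp.
rewrite hcb in hS'.
set a1 := Rsum (fun j => y j * app Xd (app X u) j).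
set b1 := Rsum (fun j => y j * u j).
have hpy : vpow pw y = exp a1.
  by rewrite vpow_exp; congr exp; apply: Rsum_ext => j; rewrite hpw ln_exp.
have hvy : vpow v y = exp b1 by rewrite vpow_exp.
set zr := Rsum (fun i => z i * resid A y beta i).
have hyw : b1 - a1 = zr - nzb.
  rewrite /b1 /a1 -Rsum_sub.
  transitivity (dot y (app (trmat A) z)).
    by rewrite /dot; apply: Rsum_ext => j; rewrite hkey /w; ring.
  rewrite (dot_app y (trmat A) z) /zr /nzb /dot -Rsum_sub.
  by apply: Rsum_ext => i; rewrite /resid /app /trmat; ring.
set T := F pw * exp (- nzb).
have hG : G (fun s => vpow v (rowv X s)) * vpow v y = T * exp zr.
  rewrite /G -/pw hpy hvy /T.
  have -> : exp b1 = exp a1 * exp zr * exp (- nzb)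
    by rewrite -!exp_plus; congr exp; lra.
  have := exp_pos a1; move=> ha; field; lra.
rewrite hG.
have hT : Rabs (T - F v) <= eps * Rabs (F v).
  have -> : T - F v = (F pw - F v * exp nzb) * exp (- nzb).
    rewrite /T; have h1 : exp nzb * exp (- nzb) = 1.
      by rewrite -exp_plus; replace (nzb + - nzb) with 0 by ring; exact: exp_0.
    transitivity (F pw * exp (- nzb) - F v * (exp nzb * exp (- nzb))); first by rewrite h1; ring.
    ring.
  rewrite Rabs_mult (Rabs_right (exp (- nzb))); last by have := exp_pos (- nzb); lra.
  have h1 : exp nzb * exp (- nzb) = 1.
    by rewrite -exp_plus; replace (nzb + - nzb) with 0 by ring; exact: exp_0.
  have hp := exp_pos (- nzb).
  have := Rmult_le_compat_r _ _ _ (Rlt_le _ _ hp) hS'.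
  have -> : eps * Rabs (F v) * exp nzb * exp (- nzb) = eps * Rabs (F v) by rewrite Rmult_assoc h1; ring.
  done.
have hlnK : 0 < ln K by rewrite -ln_1; apply: ln_increasing; lra.
have hu : forall j, Rabs (u j) <= ln K.
  move=> j; case: (hvK j) => h1 h2; have hvj := hv j.
  have hK0 : 0 < / K by apply: Rinv_0_lt_compat; lra.
  have e1 : ln (v j) <= ln K by apply: ln_le'.
  have e2 : ln (/ K) <= ln (v j) by apply: ln_le'.
  rewrite ln_Rinv in e2; last lra.
  rewrite /u; apply: Rabs_le; lra.
have hM : forall s l, Rabs (X s l) <= M.
  move=> s l; apply: (Rle_trans _ _ _ (Rmaxb_ge _ (fun j => Rabs (X s j)) l)).
  exact: (Rmaxb_ge _ (fun s => Rmaxb (fun j => Rabs (X s j))) s).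
have hM0 : 0 <= M by apply: Rmaxb_ge0.
set B0 := INR n * (M * ln K).
have hB0 : 0 <= B0 by apply: Rmult_le_pos; [exact: pos_INR | nra].
have hXub : forall s, Rabs (app X u s) <= B0.
  move=> s; rewrite /B0 -Rsum_const; apply: Rsum_abs_le => l; rewrite Rabs_mult.
  apply: Rmult_le_compat; try exact: Rabs_pos; [exact: hM | exact: hu].
have hpub : forall j, Rabs (app Xd (app X u) j) <= mnorm Xd * B0.
  move=> j; apply: (Rle_trans _ (Rsum (fun s => Rabs (Xd j s) * B0))).
    apply: Rsum_abs_le => s; rewrite Rabs_mult.
    apply: Rmult_le_compat_l; [exact: Rabs_pos | exact: hXub].
  rewrite Rsum_mulr; apply: Rmult_le_compat_r => //.
  exact: (Rmaxb_ge _ (fun i => Rsum (fun j => Rabs (Xd i j))) j).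
set W := ln K + mnorm Xd * B0.
have hX0 : 0 <= mnorm Xd := Rmaxb_ge0 _ _.
have hW0 : 0 <= W by rewrite /W; nra.
have hwb : forall j, Rabs (w j) <= W.
  move=> j; rewrite /w /W; have := Rabs_triang (u j) (- app Xd (app X u) j).
  rewrite Rabs_Ropp; have := hu j; have := hpub j; unfold Rminus; lra.
have hzb : forall i, Rabs (z i) <= mnorm D * W.
  move=> i; apply: (Rle_trans _ (Rsum (fun j => Rabs (D i j) * W))).
    apply: Rsum_abs_le => j; rewrite Rabs_mult.
    apply: Rmult_le_compat_l; [exact: Rabs_pos | exact: hwb].
  rewrite Rsum_mulr; apply: Rmult_le_compat_r => //.
  exact: (Rmaxb_ge _ (fun i => Rsum (fun j => Rabs (D i j))) i).
have hrb : forall i, Rabs (resid A y beta i) <= delta.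
  move=> i; apply: (Rle_trans _ _ _ _ hres).
  exact: (Rmaxb_ge _ (fun i => Rabs (resid A y beta i)) i).
have hzr : Rabs zr <= INR m * (mnorm D * W * delta).
  rewrite -Rsum_const; apply: Rsum_abs_le => i; rewrite Rabs_mult.
  apply: Rmult_le_compat; try exact: Rabs_pos; [exact: hzb | exact: hrb].
have hL : Rpower K (INR m * delta * mnorm D * (INR n * M * mnorm Xd + 1))
  = exp (INR m * (mnorm D * W * delta)).
  by rewrite /Rpower /W /B0; congr exp; ring.
rewrite hL.
exact: final_ineq.
Qed.
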